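(* Let $n\geq 2$ be finite. Then $RTA_n=\mathbf{SP}\{\mathfrak{A}_{nk}:k\leq n\}$, i.e. every subdirect product of full transposition set algebras of dimension $n$ is (up to isomorphism) a subalgebra of a direct product of copies of the finitely many algebras $\mathfrak{A}_{nk}$, $k\leq n$, and conversely.
   Context: For a set $U$ and ordinal $\alpha$, the full transposition set algebra of dimension $\alpha$ with base $U$ is $\langle\mathcal{P}({}^\alpha U);\cap,-,S_{ij}\rangle_{i\neq j\in\alpha}$, where $[i,j]$ is the transposition of $\alpha$ swapping $i$ and $j$ and $S_{ij}(X)=\{q\in{}^\alpha U:q\circ[i,j]\in X\}$. $SetTA_\alpha$ is the class of subalgebras of such full algebras, and $RTA_\alpha=\mathbf{SP}\,SetTA_\alpha$ (closure under isomorphic copies of subalgebras and direct products). For $k\leq n$, $\mathfrak{A}_{nk}$ is the full transposition set algebra of dimension $n$ with base $k=\{0,\dots,k-1\}$. *)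

(* Defs.v *)
From mathcomp Require Import all_boot all_fingroup.
Set Implicit Arguments. Unset Strict Implicit. Unset Printing Implicit Defensive.

(* Algebras of the similarity type of transposition algebras of dimension n:
   a carrier with a binary meet (cap), a complement (-), and unary operations
   S_ij indexed by i, j : 'I_n (only those with i != j are part of the
   signature; homomorphisms are only required to preserve those). *)
Record TA (n : nat) := MkTA {
  tacar :> Type;
  tameet : tacar -> tacar -> tacar;
  tacompl : tacar -> tacar;
  tasub : 'I_n -> 'I_n -> tacar -> tacar
}.

(* Full transposition set algebra of dimension n with base U:
   universe P(^n U), subsets represented as predicates on 'I_n -> U.
   S_ij X = { q | q o [i,j] \in X } with [i,j] = tperm i j. *)
Definition fullTA (n : nat) (U : Type) : TA n :=
  @MkTA n ((('I_n -> U) -> Prop))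
    (fun X Y q => X q /\ Y q)
    (fun X q => ~ X q)
    (fun i j X q => X (fun k => q (tperm i j k))).

Definition A_nk (n k : nat) : TA n := fullTA n 'I_k.

Definition prodTA (n : nat) (J : Type) (B : J -> TA n) : TA n :=
  @MkTA n (forall j : J, B j)
    (fun x y j => tameet (x j) (y j))
    (fun x j => tacompl (x j))
    (fun i i' x j => tasub i i' (x j)).

Definition is_hom (n : nat) (A B : TA n) (h : A -> B) : Prop :=
  (forall x y : A, h (tameet x y) = tameet (h x) (h y)) /\
  (forall x : A, h (tacompl x) = tacompl (h x)) /\
  (forall (i j : 'I_n) (x : A), i != j -> h (tasub i j x) = tasub i j (h x)).

Definition embeds (n : nat) (A B : TA n) : Prop :=
  exists h : A -> B, injective h /\ is_hom h.

Definition SP (n : nat) (K : TA n -> Prop) (A : TA n) : Prop :=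
  exists (J : Type) (B : J -> TA n), (forall j, K (B j)) /\ embeds A (prodTA B).

Definition SetTA (n : nat) (B : TA n) : Prop :=
  exists U : Type, embeds B (fullTA n U).

Definition RTA (n : nat) : TA n -> Prop := SP (@SetTA n).

Definition Ank_class (n : nat) (B : TA n) : Prop :=
  exists k, k <= n /\ B = A_nk n k.

(* Main.v *)
Require Import Defs.
From mathcomp Require Import all_boot all_fingroup.
From Stdlib Require Import FunctionalExtensionality ClassicalEpsilon.

Set Implicit Arguments.

Lemma embeds_trans n (A B C : TA n) : embeds A B -> embeds B C -> embeds A C.
Proof.
move=> [f [fi [f1 [f2 f3]]]] [g [gi [g1 [g2 g3]]]].
exists (fun x => g (f x)); split.
  by move=> x y /gi /fi.
split; [|split].
- by move=> x y; rewrite f1 g1.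
- by move=> x; rewrite f2 g2.
- by move=> i j x nij; rewrite f3 // g3.
Qed.

Theorem theorem3p7 (n : nat) (hn : 2 <= n) (A : TA n) :
  RTA A <-> SP (@Ank_class n) A.
Proof.
split.
- move=> [J [B [HB E]]].
  pose U j := proj1_sig (constructive_indefinite_description _ (HB j)).
  have HU j : embeds (B j) (fullTA n (U j)) :=
    proj2_sig (constructive_indefinite_description _ (HB j)).
  pose h j := proj1_sig (constructive_indefinite_description _ (HU j)).
  have Hh j : injective (h j) /\ is_hom (h j) :=
    proj2_sig (constructive_indefinite_description _ (HU j)).
  exists {j : J & 'I_n -> U j}, (fun _ => A_nk n n); split.
    by move=> _; exists n; split.
  apply: (embeds_trans E).
  exists (fun (x : prodTA B) (d : {j : J & 'I_n -> U j}) =>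
     ((fun p : 'I_n -> 'I_n => h (projT1 d) (x (projT1 d)) (fun k => projT2 d (p k)))
       : A_nk n n)).
  split.
    move=> x y Exy; apply: functional_extensionality_dep => j.
    case: (Hh j) => hi _; apply: hi.
    apply: functional_extensionality => q.
    exact: (equal_f (equal_f_dep Exy (existT _ j q)) id).
  split; [|split].
  + move=> x y; apply: functional_extensionality_dep => -[j g] /=.
    by case: (Hh j) => _ [-> _].
  + move=> x; apply: functional_extensionality_dep => -[j g] /=.
    by case: (Hh j) => _ [_ [-> _]].
  + move=> i i' x nij; apply: functional_extensionality_dep => -[j g] /=.
    by case: (Hh j) => _ [_ [_ ->]].
- move=> [J [B [HB E]]].
  exists J, B; split => //.
  move=> j; have [k [_ ->]] := HB j.
  exists 'I_k; exists id; split => //.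
Qed.
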